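(* Consider the following optical-network model. Each link $k$ has a set $A_k\subseteq\mathbb{Z}$ of available units. Each trait $t$ has a resource $\mathrm{RI}(t)$, a nonempty integer interval, and for each link $k$ the set $t\oplus k$ of derived traits satisfies: every $t'\in t\oplus k$ has $\mathrm{RI}(t')$ a maximal integer interval contained in $\mathrm{RI}(t)\cap A_k$, and for every maximal integer interval $J\subseteq \mathrm{RI}(t)\cap A_k$ there is $t'\in t\oplus k$ with $\mathrm{RI}(t')=J$. Fix a link $k$ and, for a label $l=(t_a,t_b)$ whose routes end at different nodes, let $l\oplus e=\{(t,t_b): t\in t_a\oplus k\}$, where appending $k$ makes both routes end at the same node. Let $\mathrm{cost}$ be a real-valued function on labels such that for any labels $l_i,l_j$: if $\mathrm{cost}(l_i)\le\mathrm{cost}(l_j)$ then $\mathrm{cost}(l')\le\mathrm{cost}(l)$ for all $l'\in l_i\oplus e$ and all $l\in l_j\oplus e$. Let $l_i=(t_{i,a},t_{i,b})$, $l_j=(t_{j,a},t_{j,b})$ be labels. If $l_i\preceq'_{\ne} l_j$, then for every $l\in l_j\oplus e$ there exists $l'\in l_i\oplus e$ with $l'\preceq'_{=} l$.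
   Context: A trait describes a route in an optical network with its cost and the interval of contiguous units available along it; $t\oplus k$ is the set of traits obtained by appending link $k$. A label is a pair of traits of two link-disjoint routes. For labels $l_i=(t_{i,a},t_{i,b})$, $l_j=(t_{j,a},t_{j,b})$ with routes ending at different nodes: $l_i\preceq'_{\ne} l_j$ iff $\mathrm{cost}(l_i)\le\mathrm{cost}(l_j)$, $\mathrm{RI}(t_{i,a})\supseteq\mathrm{RI}(t_{j,a})$ and $\mathrm{RI}(t_{i,b})\supseteq\mathrm{RI}(t_{j,b})$. For labels $l_i=(t_i,t'_i)$, $l_j=(t_j,t'_j)$ with both routes ending at the same node: $\mathrm{RI}(l_i)\supseteq_n\mathrm{RI}(l_j)$ iff $\mathrm{RI}(t_i)\supseteq\mathrm{RI}(t_j)$ and $\mathrm{RI}(t'_i)\supseteq\mathrm{RI}(t'_j)$; $\mathrm{RI}(l_i)\supseteq_x\mathrm{RI}(l_j)$ iff $\mathrm{RI}(t_i)\supseteq\mathrm{RI}(t'_j)$ and $\mathrm{RI}(t'_i)\supseteq\mathrm{RI}(t_j)$; $\mathrm{RI}(l_i)\supseteq_=\mathrm{RI}(l_j)$ iff one of these two holds; and $l_i\preceq'_= l_j$ iff $\mathrm{cost}(l_i)\le\mathrm{cost}(l_j)$ and $\mathrm{RI}(l_i)\supseteq_=\mathrm{RI}(l_j)$. *)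

(* Defs.v *)
From Stdlib Require Import ZArith Reals.
Set Implicit Arguments.

Open Scope Z_scope.

Definition zset := Z -> Prop.

Definition zsubset (I J : zset) : Prop := forall x, I x -> J x.
Definition zinter (I J : zset) : zset := fun x => I x /\ J x.

Definition is_interval (I : zset) : Prop :=
  exists a b : Z, a <= b /\ forall x, I x <-> a <= x <= b.

Definition maximal_interval_in (J S : zset) : Prop :=
  is_interval J /\ zsubset J S /\
  forall J', is_interval J' -> zsubset J J' -> zsubset J' S -> zsubset J' J.

Close Scope Z_scope.

(* A label is a pair of traits (of two link-disjoint routes). *)
Definition label (Trait : Type) : Type := (Trait * Trait)%type.

(* l (+) e = { (t, t_b) : t in t_a (+) k } for l = (t_a, t_b);
   ext t k t' means t' is in t (+) k. *)
Definition label_ext (Trait Link : Type) (ext : Trait -> Link -> Trait -> Prop)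
  (k : Link) (l l' : label Trait) : Prop :=
  ext (fst l) k (fst l') /\ (snd l') = (snd l).

Definition preceq_ne (Trait : Type) (RI : Trait -> zset) (cost : label Trait -> R)
  (li lj : label Trait) : Prop :=
  (cost li <= cost lj)%R /\ zsubset (RI (fst lj)) (RI (fst li)) /\ zsubset (RI (snd lj)) (RI (snd li)).

Definition RI_supseteq_n (Trait : Type) (RI : Trait -> zset) (li lj : label Trait) : Prop :=
  zsubset (RI (fst lj)) (RI (fst li)) /\ zsubset (RI (snd lj)) (RI (snd li)).
Definition RI_supseteq_x (Trait : Type) (RI : Trait -> zset) (li lj : label Trait) : Prop :=
  zsubset (RI (snd lj)) (RI (fst li)) /\ zsubset (RI (fst lj)) (RI (snd li)).
Definition RI_supseteq_eq (Trait : Type) (RI : Trait -> zset) (li lj : label Trait) : Prop :=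
  RI_supseteq_n RI li lj \/ RI_supseteq_x RI li lj.

Definition preceq_eq (Trait : Type) (RI : Trait -> zset) (cost : label Trait -> R)
  (li lj : label Trait) : Prop :=
  (cost li <= cost lj)%R /\ RI_supseteq_eq RI li lj.

(* Main.v *)
Require Import Defs.
From Stdlib Require Import ZArith Reals Lia Classical.

Lemma zmin_exists (P : Z -> Prop) (a : Z) :
  (forall x, P x -> (a <= x)%Z) ->
  forall n : nat, forall c, (c - a <= Z.of_nat n)%Z -> P c ->
  exists lo, P lo /\ forall x, P x -> (lo <= x)%Z.
Proof.
  intros Ha n; induction n as [|n IH]; intros c Hc Pc.
  - exists c; split; auto. intros x Px. pose proof (Ha x Px). pose proof (Ha c Pc). lia.
  - destruct (classic (exists x, P x /\ (x < c)%Z)) as [[x [Px Hx]]|Hn].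
    + apply (IH x); auto. lia.
    + exists c; split; auto. intros x Px.
      destruct (Z_lt_le_dec x c); auto. exfalso; apply Hn; eauto.
Qed.

Lemma zmin (P : Z -> Prop) (a c : Z) :
  (forall x, P x -> (a <= x)%Z) -> P c ->
  exists lo, P lo /\ forall x, P x -> (lo <= x)%Z.
Proof.
  intros Ha Pc. apply (zmin_exists P a Ha (Z.to_nat (c - a)) c); auto. lia.
Qed.

Lemma zmax (P : Z -> Prop) (b c : Z) :
  (forall x, P x -> (x <= b)%Z) -> P c ->
  exists hi, P hi /\ forall x, P x -> (x <= hi)%Z.
Proof.
  intros Hb Pc.
  destruct (zmin (fun y => P (- y)%Z) (- b) (- c)) as [lo [Plo Hlo]].
  - intros x Px. specialize (Hb _ Px). lia.
  - rewrite Z.opp_involutive; auto.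
  - exists (- lo)%Z; split; auto. intros x Px. specialize (Hlo (- x)%Z).
    rewrite Z.opp_involutive in Hlo. specialize (Hlo Px). lia.
Qed.

Theorem proposition5
  (Trait Link : Type)
  (A : Link -> zset)
  (RI : Trait -> zset)
  (ext : Trait -> Link -> Trait -> Prop)
  (HRI : forall t, is_interval (RI t))
  (Hext_sound : forall t k t', ext t k t' ->
      maximal_interval_in (RI t') (zinter (RI t) (A k)))
  (Hext_complete : forall t k (J : zset),
      maximal_interval_in J (zinter (RI t) (A k)) ->
      exists t', ext t k t' /\ forall x, RI t' x <-> J x)
  (k : Link)
  (cost : label Trait -> R)
  (Hcost : forall li lj : label Trait, (cost li <= cost lj)%R ->
      forall l' l, label_ext ext k li l' -> label_ext ext k lj l ->
      (cost l' <= cost l)%R)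
  (li lj : label Trait) :
  preceq_ne RI cost li lj ->
  forall l, label_ext ext k lj l ->
  exists l', label_ext ext k li l' /\ preceq_eq RI cost l' l.
Proof.
  intros [Hc [Ha Hb]] l [Hl Hl2].
  destruct (Hext_sound _ _ _ Hl) as [[c [d [Hcd Hcdi]]] [Hsub _]].
  destruct (HRI (fst li)) as [a [b [Hab Habi]]].
  set (S := zinter (RI (fst li)) (A k)).
  assert (HtS : forall x, RI (fst l) x -> S x).
  { intros x Hx. destruct (Hsub x Hx) as [H1 H2]. split; auto. }
  assert (HSab : forall x, S x -> (a <= x <= b)%Z).
  { intros x [H1 _]. apply Habi; auto. }
  destruct (zmin (fun x => (x <= c)%Z /\ forall y, (x <= y <= c)%Z -> S y) a c)
    as [lo [[Hlo1 Hlo2] Hlo3]].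
  { intros x [H1 H]. assert (S x) by (apply H; lia). specialize (HSab _ H0). lia. }
  { split; [lia|]. intros y Hy. apply HtS, Hcdi. lia. }
  destruct (zmax (fun x => (d <= x)%Z /\ forall y, (d <= y <= x)%Z -> S y) b d)
    as [hi [[Hhi1 Hhi2] Hhi3]].
  { intros x [H1 H]. assert (S x) by (apply H; lia). specialize (HSab _ H0). lia. }
  { split; [lia|]. intros y Hy. apply HtS, Hcdi. lia. }
  set (J := fun x => (lo <= x <= hi)%Z).
  assert (HJS : forall x, J x -> S x).
  { intros x Hx. unfold J in Hx.
    destruct (Z_le_gt_dec x c). apply Hlo2; lia.
    destruct (Z_le_gt_dec x d). apply HtS, Hcdi; lia. apply Hhi2; lia. }
  assert (HJ : maximal_interval_in J S).
  { split; [exists lo, hi; split; [lia| intros; unfold J; tauto]|].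
    split; [exact HJS|].
    intros J' [p [q [Hpq Hpqi]]] HJJ' HJ'S x Hx.
    assert (Hp : (p <= lo)%Z) by (apply Hpqi, HJJ'; unfold J; lia).
    assert (Hq : (hi <= q)%Z) by (apply Hpqi, HJJ'; unfold J; lia).
    assert (Hlop : (lo <= p)%Z).
    { apply Hlo3. split; [lia|]. intros y Hy. apply HJ'S, Hpqi; lia. }
    assert (Hhiq : (q <= hi)%Z).
    { apply Hhi3. split; [lia|]. intros y Hy. apply HJ'S, Hpqi; lia. }
    apply Hpqi in Hx. unfold J; lia. }
  destruct (Hext_complete _ _ _ HJ) as [t' [Ht' HRIt']].
  exists (t', snd li).
  assert (Hle : label_ext ext k li (t', snd li)) by (split; simpl; auto).
  split; auto.
  split.
  - apply (Hcost li lj Hc); auto. split; auto.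
  - left. split; simpl.
    + intros x Hx. apply HRIt'. apply Hcdi in Hx. unfold J; lia.
    + intros x Hx. rewrite Hl2 in Hx. auto.
Qed.
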